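(* Let $V\subset A_N$ be a maximal totally singular subspace. Then $f_V\in\mathbb C[A_N]^{SL(2,\mathbb Z)}$, and $f_V$ is, up to a constant multiple, the unique vector of $\mathbb C[A_N]$ on which every transvection $t_\alpha$ with $\alpha\in V$, $q_N(\alpha)=1$, acts as $-1$.
   Context: $N=U\oplus U(2)\oplus D_4\oplus D_4$ ($U$ hyperbolic plane, $D_4$ negative definite, $U(2)$ doubled form); $A_N=N^*/N\cong\mathbb F_2^6$ with $q_N(x)=\langle x,x\rangle\bmod2\mathbb Z\in\mathbb Z/2\mathbb Z$, bilinear form $b_N(x,y)=2\langle x,y\rangle\bmod2$; $(A_N,q_N)\cong u^{\oplus3}$ with $u$ the hyperbolic plane over $\mathbb F_2$. Weil representation on $\mathbb C[A_N]$ (basis $e_\alpha$): $Te_\alpha=(-1)^{q_N(\alpha)}e_\alpha$, $Se_\alpha=\frac18\sum_\beta(-1)^{b_N(\beta,\alpha)}e_\beta$ for $T=\begin{pmatrix}1&1\\0&1\end{pmatrix}$, $S=\begin{pmatrix}0&-1\\1&0\end{pmatrix}$. $O(q_N)$ acts on $\mathbb C[A_N]$ by $g(e_\alpha)=e_{g(\alpha)}$. For $\alpha$ with $q_N(\alpha)=1$ the transvection is $t_\alpha(x)=x+b_N(x,\alpha)\alpha\in O(q_N)$. A 3-dimensional subspace $V\subset A_N$ is maximal totally singular if $(V,q_N|_V)\cong(\mathbb F_2^3,\ x\mapsto x_1+x_2+x_3)$. For such $V$, $I=\ker(q_N|_V)$ is a 2-dimensional totally isotropic subspace, contained in exactly two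 maximal (3-dimensional) totally isotropic subspaces $I^+,I^-$, and $f_V:=\sum_{\alpha\in I^+}e_\alpha-\sum_{\alpha\in I^-}e_\alpha$ (defined up to sign). *)

(* Defs.v *)
From HB Require Import structures.
From mathcomp Require Import all_boot all_order all_algebra all_field.
Set Implicit Arguments. Unset Strict Implicit. Unset Printing Implicit Defensive.
Import Order.TTheory GRing.Theory Num.Theory.
Local Open Scope ring_scope.

(* The discriminant form (A_N, q_N) modelled as u^{+3} over F_2:
   A_N = F_2^6 (row vectors), q(x) = x0 x1 + x2 x3 + x4 x5. *)
Notation AN := 'rV['F_2]_6.

Definition qN (x : AN) : 'F_2 :=
  x 0 0 * x 0 1 + x 0 2 * x 0 3 + x 0 4 * x 0 5.

Definition bN (x y : AN) : 'F_2 := qN (x + y) - qN x - qN y.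

Definition sgn2 (a : 'F_2) : algC := if a == 0 then 1 else -1.

(* C[A_N]: coefficient functions f = sum_alpha f(alpha) e_alpha *)
Notation CA := {ffun AN -> algC}.

Definition weilT (f : CA) : CA := [ffun a => sgn2 (qN a) * f a].
Definition weilS (f : CA) : CA :=
  [ffun b => 8%:R^-1 * \sum_(a : AN) sgn2 (bN b a) * f a].

(* Invariance under SL(2,Z) (generated by S and T) *)
Definition SL2Z_invariant (f : CA) : Prop := weilS f = f /\ weilT f = f.

(* Permutation action g(e_a) = e_{g a} of a map g on C[A_N] *)
Definition actA (g : AN -> AN) (f : CA) : CA :=
  [ffun b => \sum_(a : AN | g a == b) f a].

Definition transv (al : AN) (x : AN) : AN := x + bN x al *: al.

(* Subspaces of A_N are represented by square matrices (row spaces, %MS). *)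
Definition max_tot_singular (V : 'M['F_2]_6) : Prop :=
  exists phi : 'M['F_2]_(3, 6),
    [/\ row_free phi, (phi == V)%MS &
        forall a : 'rV['F_2]_3, qN (a *m phi) = a 0 0 + a 0 1 + a 0 2].

Definition max_tot_isotropic (W : 'M['F_2]_6) : Prop :=
  \rank W = 3%N /\ forall x : AN, (x <= W)%MS -> qN x = 0.

Definition contains_kerq (V W : 'M['F_2]_6) : Prop :=
  forall x : AN, (x <= V)%MS -> qN x = 0 -> (x <= W)%MS.

(* f_V = sum_{a in I+} e_a - sum_{a in I-} e_a *)
Definition fV (Wp Wm : 'M['F_2]_6) : CA :=
  [ffun a => (if (a <= Wp)%MS then 1 else 0) - (if (a <= Wm)%MS then 1 else 0)].

(* Main.v *)
Require Import Defs.
From HB Require Import structures.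
From mathcomp Require Import all_boot all_order all_algebra all_field.
From mathcomp Require Import ring.
Import Order.TTheory GRing.Theory Num.Theory.
Local Open Scope ring_scope.
Set Implicit Arguments. Unset Strict Implicit.

Lemma F2_cases (z : 'F_2) : z = 0 \/ z = 1.
Proof. case: z => [[|[|//]]] Hz; [left|right]; exact/val_inj. Qed.

Lemma addxx (z : 'F_2) : z + z = 0.
Proof. by case: (F2_cases z) => ->; [rewrite addr0|apply/val_inj]. Qed.

Lemma oppF (z : 'F_2) : - z = z.
Proof. by apply/eqP; rewrite eq_sym -subr_eq0 opprK addxx. Qed.

Lemma addvv (x : AN) : x + x = 0.
Proof. by apply/matrixP => i j; rewrite !mxE addxx. Qed.

Lemma bN_expl (x y : AN) : bN x y =
  x 0 0 * y 0 1 + x 0 1 * y 0 0 + x 0 2 * y 0 3 + x 0 3 * y 0 2 + x 0 4 * y 0 5 + x 0 5 * y 0 4.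
Proof. rewrite /bN /qN !mxE; ring. Qed.

Lemma qN_add (x y : AN) : qN (x + y) = qN x + qN y + bN x y.
Proof. rewrite /bN; ring. Qed.

Lemma bN_sym x y : bN x y = bN y x.
Proof. rewrite !bN_expl; ring. Qed.

Lemma bN_addl x y z : bN (x + y) z = bN x z + bN y z.
Proof. rewrite !bN_expl !mxE; ring. Qed.

Lemma bN_scalel c x z : bN (c *: x) z = c * bN x z.
Proof. rewrite !bN_expl !mxE; ring. Qed.

Lemma bN_addr x y z : bN z (x + y) = bN z x + bN z y.
Proof. by rewrite bN_sym bN_addl !(bN_sym z). Qed.

Lemma qN0 : qN 0 = 0.
Proof. by rewrite /qN !mxE mul0r !addr0. Qed.

Lemma bN_xx x : bN x x = 0.
Proof. by rewrite /bN addvv qN0 sub0r -opprD addxx oppr0. Qed.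

Lemma bN0l z : bN 0 z = 0.
Proof. by rewrite bN_expl !mxE !mul0r !addr0. Qed.

Lemma transvK al x : transv al (transv al x) = x.
Proof.
rewrite /transv bN_addl bN_scalel bN_xx mulr0 addr0 -addrA.
by rewrite -scalerDl addxx scale0r addr0.
Qed.

Lemma bN0r z : bN z 0 = 0.
Proof. by rewrite bN_sym bN0l. Qed.

Lemma bN_lin x y : bN x y = \sum_(j < 6) y 0 j * bN x (delta_mx 0 j).
Proof.
rewrite {1}(row_sum_delta y).
rewrite (@big_morph _ _ (bN x) 0 +%R 0 +%R (fun a b => bN_addr a b x) (bN0r x)).
by apply: eq_bigr => j _; rewrite bN_sym bN_scalel bN_sym.
Qed.

Definition Gr : 'M['F_2]_6 := \matrix_(j, k) bN (delta_mx 0 j) (delta_mx 0 k).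

Lemma mulGr x k : (x *m Gr) 0 k = bN x (delta_mx 0 k).
Proof.
rewrite mxE bN_sym bN_lin; apply: eq_bigr => j _.
by rewrite mxE bN_sym.
Qed.

Lemma nondeg x : (forall k, bN x (delta_mx 0 k) = 0) -> x = 0.
Proof.
move=> H.
have H0 := H 0; have H1 := H 1; have H2 := H 2; have H3 := H 3; have H4 := H 4; have H5 := H 5.
rewrite !bN_expl !mxE /= in H0 H1 H2 H3 H4 H5.
apply/matrixP => i j; rewrite (ord1 i) mxE.
rewrite !(mulr0,mulr1,addr0,add0r) in H0 H1 H2 H3 H4 H5.
case: j => [[|[|[|[|[|[|//]]]]]] Hj];
  [rewrite -[RHS]H1|rewrite -[RHS]H0|rewrite -[RHS]H3|rewrite -[RHS]H2|rewrite -[RHS]H5|rewrite -[RHS]H4];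
  congr (x 0 _); exact/val_inj.
Qed.

Lemma Gr_free : row_free Gr.
Proof.
rewrite -kermx_eq0; apply/eqP/row_matrixP => i; rewrite row0.
apply: nondeg => k; rewrite -mulGr -row_mul mulmx_ker row0.
by rewrite mxE.
Qed.

Lemma mulGW (W : 'M['F_2]_6) z i : (z *m (Gr *m W^T)) 0 i = bN z (row i W).
Proof.
rewrite mulmxA mxE [RHS]bN_lin; apply: eq_bigr => k _.
by rewrite mulGr !mxE mulrC.
Qed.

Lemma perpW (W : 'M['F_2]_6) : \rank W = 3%N ->
  (forall x y : AN, (x <= W)%MS -> (y <= W)%MS -> bN x y = 0) ->
  forall b : AN, (forall a : AN, (a <= W)%MS -> bN b a = 0) -> (b <= W)%MS.
Proof.
move=> rW iso b Hb.
set K := kermx (Gr *m W^T).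
have rA : \rank (Gr *m W^T) = 3%N.
  rewrite -mxrank_tr trmx_mul trmxK mxrankMfree // row_free_unit unitmx_tr -row_free_unit.
  exact: Gr_free.
have rK : \rank K = 3%N by rewrite mxrank_ker rA.
have WK : (W <= K)%MS.
  apply/row_subP => i; apply/sub_kermxP/rowP => j.
  by rewrite mulGW mxE iso // row_sub.
have bK : (b <= K)%MS.
  apply/sub_kermxP/rowP => j.
  by rewrite mulGW mxE Hb // row_sub.
have := mxrank_leqif_sup WK; rewrite rK rW => /leqif_refl KW.
exact: submx_trans bK KW.
Qed.

Lemma card_W (W : 'M['F_2]_6) : \rank W = 3%N ->
  #|[pred a : AN | (a <= W)%MS]| = 8%N.
Proof.
move=> rW.
pose f := fun c : 'rV['F_2]_(\rank W) => c *m row_base W.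
have finj : injective f by apply: row_free_inj; exact: row_base_free.
have -> : #|[pred a : AN | (a <= W)%MS]| = #|codom f|.
  apply: eq_card => a; rewrite inE -(eq_row_base W).
  apply/submxP/codomP => [[D ->]|[D ->]]; by exists D.
by rewrite card_codom // card_mx card_Fp // rW.
Qed.

Lemma sgn2_add1 z : sgn2 (z + 1) = - sgn2 z.
Proof.
rewrite /sgn2; case: (F2_cases z) => ->; first by rewrite add0r.
by rewrite addxx eqxx opprK.
Qed.

Lemma iso_of (W : 'M['F_2]_6) : max_tot_isotropic W ->
  forall x y : AN, (x <= W)%MS -> (y <= W)%MS -> bN x y = 0.
Proof.
move=> [_ HW] x y Hx Hy.
by rewrite /bN !HW ?addmx_sub // !subr0.
Qed.

Lemma sumW (W : 'M['F_2]_6) b : max_tot_isotropic W ->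
  \sum_(a : AN | (a <= W)%MS) sgn2 (bN b a) = if (b <= W)%MS then 8 else 0.
Proof.
move=> HW; have [rW _] := HW.
case: ifP => Hb.
  rewrite (eq_bigr (fun _ => 1)); last by move=> a Ha; rewrite (@iso_of W HW) // /sgn2 eqxx.
  by rewrite sumr_const card_W.
have [a0 Ha0 Hba0] : exists2 a0 : AN, (a0 <= W)%MS & bN b a0 = 1.
  case: (pickP [pred a : AN | (a <= W)%MS && (bN b a == 1)]) => [a0 /andP[? /eqP ?]|Hn].
    by exists a0.
  move/negbT: Hb => /negP; case.
  apply: perpW => //; first exact: (@iso_of W HW).
  move=> a Ha; case: (F2_cases (bN b a)) => // H1.
  by have := Hn a; rewrite /= Ha H1 eqxx.
set S := \sum_(a | _) _.
have SS : S = - S.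
  rewrite {1}/S (reindex_inj (addIr a0)) /= /S.
  rewrite -sumrN; apply: eq_big => a.
    apply/idP/idP => H; last exact: addmx_sub.
    by rewrite -[a](addr0) -(addvv a0) addrA addmx_sub.
  by move=> _; rewrite bN_addr Hba0 sgn2_add1.
apply/eqP; have: S *+ 2 == 0 by rewrite mulr2n {1}SS addNr.
by rewrite mulrn_eq0.
Qed.

Lemma sum_ind (W : 'M['F_2]_6) b :
  \sum_(a : AN) sgn2 (bN b a) * (if (a <= W)%MS then 1 else 0)
  = \sum_(a : AN | (a <= W)%MS) sgn2 (bN b a).
Proof.
rewrite [RHS]big_mkcond; apply: eq_bigr => a _.
by case: ifP; rewrite ?mulr1 ?mulr0.
Qed.

Lemma fV_inv Wp Wm : max_tot_isotropic Wp -> max_tot_isotropic Wm ->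
  SL2Z_invariant (fV Wp Wm).
Proof.
move=> Hp Hm; split.
  apply/ffunP => b; rewrite !ffunE.
  rewrite (eq_bigr (fun a => sgn2 (bN b a) * (if (a <= Wp)%MS then 1 else 0)
     - sgn2 (bN b a) * (if (a <= Wm)%MS then 1 else 0))); last first.
    by move=> a _; rewrite ffunE mulrBr.
  rewrite sumrB !sum_ind !sumW // mulrBr.
  have H8 : (8%:R : algC)^-1 * 8%:R = 1 by rewrite mulVf // pnatr_eq0.
  by case: ifP; case: ifP; rewrite ?mulr0 ?H8.
apply/ffunP => a; rewrite !ffunE.
have [_ qp] := Hp; have [_ qm] := Hm.
case: ifP => Ha; first by rewrite qp // /sgn2 eqxx mul1r.
case: ifP => Hb; first by rewrite qm // /sgn2 eqxx mul1r.
by rewrite subr0 mulr0.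
Qed.

Lemma V_rank V : max_tot_singular V -> \rank V = 3%N.
Proof. by move=> [phi [fr /eqmxP e _]]; rewrite -e; apply/eqP. Qed.

Lemma V_iso V : max_tot_singular V ->
  forall x y : AN, (x <= V)%MS -> (y <= V)%MS -> bN x y = 0.
Proof.
move=> [phi [fr /eqmxP e hq]] x y.
rewrite -!e => /submxP [a ->] /submxP [b ->].
rewrite /bN -mulmxDl !hq !mxE; ring.
Qed.

Lemma V_perp V : max_tot_singular V ->
  forall b : AN, (forall a : AN, (a <= V)%MS -> bN b a = 0) -> (b <= V)%MS.
Proof. move=> HV; apply: perpW; [exact: V_rank | exact: V_iso]. Qed.

Lemma V_alpha V : max_tot_singular V ->
  exists2 al : AN, (al <= V)%MS & qN al = 1.
Proof.
move=> [phi [fr /eqmxP e hq]].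
exists (delta_mx 0 0 *m phi); first by rewrite -e submxMl.
by rewrite hq !mxE /= !addr0.
Qed.

Lemma mul_const1 (a : 'rV['F_2]_3) :
  (a *m (const_mx 1 : 'cV['F_2]_3)) 0 0 = a 0 0 + a 0 1 + a 0 2.
Proof.
rewrite mxE !big_ord_recl big_ord0 !mxE !mulr1 addr0 addrA.
by congr (_ + a 0 _ + a 0 _); apply/val_inj.
Qed.

Lemma V_I V : max_tot_singular V ->
  exists I : 'M['F_2]_(3, 6), [/\ \rank I = 2%N, (I <= V)%MS &
     forall i, qN (row i I) = 0].
Proof.
move=> [phi [fr /eqmxP e hq]].
pose s : 'cV['F_2]_3 := const_mx 1.
have rs : \rank s = 1%N.
  apply/eqP; rewrite eqn_leq rank_leq_col lt0n mxrank_eq0.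
  apply/eqP => /matrixP /(_ 0 0); rewrite !mxE => /eqP; by rewrite oner_eq0.
exists (kermx s *m phi); split.
- by rewrite mxrankMfree // mxrank_ker rs.
- by rewrite -e submxMl.
- move=> i; rewrite row_mul hq -mul_const1.
  by rewrite -row_mul mulmx_ker row0 mxE.
Qed.

Lemma sub_eqrank m1 m2 (A : 'M['F_2]_(m1, 6)) (B : 'M['F_2]_(m2, 6)) :
  (A <= B)%MS -> (\rank B <= \rank A)%N -> (B <= A)%MS.
Proof.
move=> sAB le.
have eqr : \rank B = \rank A by apply/eqP; rewrite eqn_leq le mxrankS.
by move: (mxrank_leqif_sup sAB); rewrite eqr => /leqif_refl.
Qed.

Lemma JV V W1 W2 : max_tot_singular V -> max_tot_isotropic W1 ->
  max_tot_isotropic W2 -> contains_kerq V W1 -> contains_kerq V W2 ->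
  ~~ (W1 == W2)%MS ->
  forall w : AN, (w <= W1)%MS -> (w <= W2)%MS -> (w <= V)%MS.
Proof.
move=> HV [r1 q1] [r2 q2] k1 k2 ne w w1 w2.
have [I [rI IV qI]] := V_I HV.
have IW (W : 'M['F_2]_6) : contains_kerq V W -> (I <= W)%MS.
  move=> k; apply/row_subP => i; apply: k (qI i).
  exact: submx_trans (row_sub i I) IV.
set J := (W1 :&: W2)%MS.
have IJ : (I <= J)%MS by rewrite sub_capmx !IW.
have rJ : (\rank J <= 2)%N.
  have : (\rank J <= 3)%N by have := mxrankS (capmxSl W1 W2); rewrite r1.
  rewrite leq_eqVlt ltnS => /orP [/eqP rJ3|//].
  have W1J : (W1 <= J)%MS by apply: sub_eqrank; rewrite ?capmxSl // rJ3 r1.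
  have W12 : (W1 <= W2)%MS := submx_trans W1J (capmxSr _ _).
  have W21 : (W2 <= W1)%MS by apply: sub_eqrank; rewrite // r1 r2.
  by move: ne; rewrite W12 W21.
have JI : (J <= I)%MS by apply: sub_eqrank; rewrite // rI.
apply: submx_trans IV; apply: submx_trans JI.
by rewrite sub_capmx w1 w2.
Qed.

Lemma F2_10 : (1 : 'F_2) != 0.
Proof. exact: oner_neq0. Qed.

Lemma perpV2 V al x : max_tot_singular V -> (al <= V)%MS -> qN al = 1 ->
  (forall y : AN, (y <= V)%MS -> qN y = 0 -> bN x y = 0) -> bN x al = 0 ->
  (x <= V)%MS.
Proof.
move=> HV Hal qal Hy Hx; apply: (V_perp HV) => a Ha.
case: (F2_cases (qN a)) => qa; first exact: Hy.
have Hs : ((a + al)%R <= V)%MS by rewrite addmx_sub.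
have := Hy _ Hs; rewrite qN_add qa qal (V_iso HV Ha Hal) addr0 addxx => /(_ erefl).
by rewrite bN_addr Hx addr0.
Qed.

Lemma outW V W al w : max_tot_singular V -> max_tot_isotropic W ->
  contains_kerq V W -> (al <= V)%MS -> qN al = 1 ->
  (w <= W)%MS -> ~~ (w <= V)%MS -> bN w al = 1.
Proof.
move=> HV HW k Hal qal Hw nV.
case: (F2_cases (bN w al)) => // h0; exfalso; move/negP: nV; apply.
apply: (perpV2 HV Hal qal) => // y Hy qy.
exact: (iso_of HW Hw (k _ Hy qy)).
Qed.

Lemma cross V W1 W2 al x w : max_tot_singular V -> max_tot_isotropic W1 ->
  max_tot_isotropic W2 -> contains_kerq V W1 -> contains_kerq V W2 ->
  ~~ (W1 == W2)%MS -> (al <= V)%MS -> qN al = 1 ->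
  (x <= W1)%MS -> ~~ (x <= V)%MS -> (w <= W2)%MS -> ~~ (w <= V)%MS -> bN x w = 1.
Proof.
move=> HV H1 H2 k1 k2 ne Hal qal Hx nx Hw nw.
case: (F2_cases (bN x w)) => // h0; exfalso.
have zV : ((x + w)%R <= V)%MS.
  apply: (perpV2 HV Hal qal).
    move=> y Hy qy; rewrite bN_addl (iso_of H1 Hx (k1 _ Hy qy)).
    by rewrite (iso_of H2 Hw (k2 _ Hy qy)) addr0.
  by rewrite bN_addl (outW HV H1 k1 Hal qal Hx nx) (outW HV H2 k2 Hal qal Hw nw) addxx.
have qz : qN (x + w) = 0.
  by rewrite qN_add h0 (proj2 H1 _ Hx) (proj2 H2 _ Hw) !addr0.
have zW2 := k2 _ zV qz.
have xW2 : (x <= W2)%MS.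
  by rewrite -[x]addr0 -(addvv w) addrA addmx_sub.
by move/negP: nx; apply; exact: (JV HV H1 H2 k1 k2 ne Hx xW2).
Qed.

Lemma fixW V W1 W2 al x : max_tot_singular V -> max_tot_isotropic W1 ->
  contains_kerq V W1 -> contains_kerq V W2 -> (al <= V)%MS -> qN al = 1 ->
  bN x al = 0 -> (x <= W1)%MS -> (x <= W2)%MS.
Proof.
move=> HV H1 k1 k2 Hal qal h0 Hx.
have xV : (x <= V)%MS.
  apply: (perpV2 HV Hal qal) => // y Hy qy.
  exact: (iso_of H1 Hx (k1 _ Hy qy)).
exact: (k2 _ xV (proj2 H1 _ Hx)).
Qed.

Lemma shiftW V W1 W2 al x : max_tot_singular V -> max_tot_isotropic W1 ->
  max_tot_isotropic W2 -> contains_kerq V W1 -> contains_kerq V W2 ->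
  ~~ (W1 == W2)%MS -> (al <= V)%MS -> qN al = 1 ->
  bN x al = 1 -> (x <= W1)%MS -> ((x + al)%R <= W2)%MS.
Proof.
move=> HV H1 H2 k1 k2 ne Hal qal h1 Hx.
apply: perpW; [exact: (proj1 H2) | exact: iso_of H2 |].
move=> w Hw; rewrite bN_addl.
case: (boolP (w <= V)%MS) => wV.
  have wW1 := k1 _ wV (proj2 H2 _ Hw).
  by rewrite (iso_of H1 Hx wW1) (V_iso HV Hal wV) addr0.
have nx : ~~ (x <= V)%MS.
  apply/negP => xV; move: h1; rewrite (V_iso HV xV Hal) => /eqP.
  by rewrite eq_sym (negbTE F2_10).
rewrite (cross HV H1 H2 k1 k2 ne Hal qal Hx nx Hw wV).
by rewrite bN_sym (outW HV H2 k2 Hal qal Hw wV) addxx.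
Qed.

Definition CondV (V : 'M['F_2]_6) (h : CA) := forall al : AN, (al <= V)%MS ->
  qN al = 1 -> forall x, h (transv al x) = - h x.

Lemma actA_transv al (g : CA) : actA (transv al) g = [ffun b => g (transv al b)].
Proof.
apply/ffunP => b; rewrite !ffunE (big_pred1 (transv al b)) // => a /=.
by apply/eqP/eqP => [<-|->]; rewrite transvK.
Qed.

Lemma condE V (g : CA) :
  (forall al : AN, (al <= V)%MS -> qN al = 1 -> actA (transv al) g = - g)
  <-> CondV V g.
Proof.
split => H al Hal qal.
  move=> x; have := H al Hal qal; rewrite actA_transv => /ffunP /(_ x).
  by rewrite !ffunE.
by rewrite actA_transv; apply/ffunP => x; rewrite !ffunE; exact: H.
Qed.

Lemma algC_oppeq (z : algC) : z = - z -> z = 0.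
Proof.
move=> E; apply/eqP; have: z *+ 2 == 0 by rewrite mulr2n {1}E addNr.
by rewrite mulrn_eq0.
Qed.

Lemma bN_shift z y a : bN z y = bN z (y + a) + bN z a.
Proof. by rewrite bN_addr -addrA addxx addr0. Qed.

Lemma fV_cond V Wp Wm : max_tot_singular V -> max_tot_isotropic Wp ->
  max_tot_isotropic Wm -> contains_kerq V Wp -> contains_kerq V Wm ->
  ~~ (Wp == Wm)%MS -> CondV V (fV Wp Wm).
Proof.
move=> HV Hp Hm kp km ne.
have ne' : ~~ (Wm == Wp)%MS by rewrite andbC.
move=> al Hal qal x; rewrite !ffunE /transv.
case: (F2_cases (bN x al)) => h; rewrite h; [rewrite scale0r addr0 | rewrite scale1r].
  have -> : (x <= Wp)%MS = (x <= Wm)%MS.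
    by apply/idP/idP; [apply: (fixW HV Hp kp km Hal qal h) | apply: (fixW HV Hm km kp Hal qal h)].
  by rewrite subrr oppr0.
have hal : bN (x + al) al = 1 by rewrite bN_addl h bN_xx addr0.
have E1 : ((x + al)%R <= Wp)%MS = (x <= Wm)%MS.
  apply/idP/idP => H.
    by have := shiftW HV Hp Hm kp km ne Hal qal hal H; rewrite -addrA addvv addr0.
  exact: (shiftW HV Hm Hp km kp ne' Hal qal h H).
have E2 : ((x + al)%R <= Wm)%MS = (x <= Wp)%MS.
  apply/idP/idP => H.
    by have := shiftW HV Hm Hp km kp ne' Hal qal hal H; rewrite -addrA addvv addr0.
  exact: (shiftW HV Hp Hm kp km ne Hal qal h H).
by rewrite E1 E2 opprB.
Qed.

Lemma uniq_e V Wp Wm p al0 : max_tot_singular V -> max_tot_isotropic Wp ->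
  max_tot_isotropic Wm -> contains_kerq V Wp -> contains_kerq V Wm ->
  (p <= Wp)%MS -> ~~ (p <= Wm)%MS -> (al0 <= V)%MS -> qN al0 = 1 ->
  forall x : AN, exists e : algC, forall h, CondV V h -> h x = e * h p.
Proof.
move=> HV Hp Hm kp km pWp pWm Hal0 qal0 x.
case: (pickP [pred a : AN | (a <= V)%MS && (qN a == 1) && (bN x a == 0)]).
  move=> a /andP [/andP [aV /eqP qa] /eqP ba].
  exists 0 => h Hh; rewrite mul0r; apply: algC_oppeq.
  by have := Hh a aV qa x; rewrite /transv ba scale0r addr0.
move=> Hn.
have hx1 : forall a : AN, (a <= V)%MS -> qN a = 1 -> bN x a = 1.
  move=> a aV qa; case: (F2_cases (bN x a)) => // h0.
  by have := Hn a; rewrite /= aV qa h0 !eqxx.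
have pV : ~~ (p <= V)%MS.
  by apply/negP => pV; move/negP: pWm; apply; apply: km pV (proj2 Hp _ pWp).
have hp1 : forall a : AN, (a <= V)%MS -> qN a = 1 -> bN p a = 1.
  by move=> a aV qa; apply: (outW HV Hp kp aV qa pWp pV).
set v := x + p.
have vV : (v <= V)%MS.
  apply: (perpV2 HV Hal0 qal0).
    move=> y yV qy.
    have y1V : ((y + al0)%R <= V)%MS by rewrite addmx_sub.
    have qy1 : qN (y + al0) = 1 by rewrite qN_add qy qal0 (V_iso HV yV Hal0) add0r addr0.
    rewrite /v bN_addl (bN_shift x y al0) (bN_shift p y al0).
    by rewrite hx1 // hp1 // hx1 // hp1 // !addxx.
  by rewrite /v bN_addl hx1 // hp1 // addxx.
have xpv : x = p + v by rewrite /v addrC -addrA addvv addr0.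
case: (F2_cases (qN v)) => qv.
  exists 1 => h Hh; rewrite mul1r.
  have v1V : ((v + al0)%R <= V)%MS by rewrite addmx_sub.
  have qv1 : qN (v + al0) = 1 by rewrite qN_add qv qal0 (V_iso HV vV Hal0) add0r addr0.
  have Ep' : transv al0 p = p + al0 by rewrite /transv hp1 // scale1r.
  have b1 : bN (p + al0) (v + al0) = 1.
    by rewrite bN_addl hp1 // (V_iso HV Hal0 v1V) addr0.
  have Ex : transv (v + al0) (p + al0) = x.
    rewrite /transv b1 scale1r /v; apply/matrixP => i j; rewrite !mxE.
    transitivity (x i j + (p i j + p i j) + (al0 i j + al0 i j)); first ring.
    by rewrite !addxx !addr0.
  by rewrite -Ex (Hh _ v1V qv1) -Ep' (Hh _ Hal0 qal0) opprK.
exists (-1) => h Hh; rewrite mulN1r.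
have Ex : transv v p = x by rewrite /transv hp1 // scale1r.
by rewrite -Ex (Hh _ vV qv).
Qed.

Unset Implicit Arguments.

Theorem theorem5p4 (V Wp Wm : 'M['F_2]_6) :
  max_tot_singular V ->
  max_tot_isotropic Wp -> max_tot_isotropic Wm ->
  contains_kerq V Wp -> contains_kerq V Wm -> ~~ (Wp == Wm)%MS ->
  SL2Z_invariant (fV Wp Wm) /\
  (forall g : CA,
     (forall al : AN, (al <= V)%MS -> qN al = 1 -> actA (transv al) g = - g)
     <-> exists c : algC, g = [ffun a => c * fV Wp Wm a]).
Proof.
move=> HV Hp Hm kp km ne.
split; first exact: fV_inv.
have [al0 Hal0 qal0] := V_alpha HV.
have nsub : ~~ (Wp <= Wm)%MS.
  apply/negP => sub; move: ne; rewrite sub /=.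
  by rewrite (sub_eqrank sub) // (proj1 Hp) (proj1 Hm).
have [i ni] := row_subPn nsub.
set p := row i Wp.
have pWp : (p <= Wp)%MS := row_sub i Wp.
have hfV := fV_cond HV Hp Hm kp km ne.
move=> g; rewrite condE; split.
  move=> Hg; exists (g p); apply/ffunP => x; rewrite ffunE.
  have [e He] := uniq_e HV Hp Hm kp km pWp ni Hal0 qal0 x.
  rewrite (He g Hg) (He _ hfV) ffunE pWp (negbTE ni) subr0 mulr1.
  by rewrite mulrC.
move=> [c ->] al Hal qal x.
have := hfV al Hal qal x; rewrite !ffunE => ->.
by rewrite mulrN.
Qed.
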